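(* Let $\bm{X}\in\mathbb{R}^{d\times n}$, $1\le K\le\min\{n,d\}$, $h(\bm{P},\bm{Q})=-\langle\bm{P},\bm{X}^T\bm{Q}\rangle+\delta_{\mathcal{B}(n,K)}(\bm{P})+\delta_{{\rm St}(d,K)}(\bm{Q})$, and for $\beta>0$ let $\Psi_\beta(\bm{P},\bm{Q},\bm{Q}')=h(\bm{P},\bm{Q})+\frac\beta2\|\bm{Q}-\bm{Q}'\|_F^2$. If $(\bm{P},\bm{Q},\bm{Q}')\in\mathcal{B}(n,K)\times{\rm St}(d,K)\times\mathbb{R}^{d\times K}$ is a limiting critical point of $\Psi_\beta$, then $\bm{Q}=\bm{Q}'$. Moreover, $(\bm{P},\bm{Q},\bm{Q})$ is a limiting critical point of $\Psi_\beta$ if and only if $(\bm{P},\bm{Q})$ is a limiting critical point of $h$.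
   Context: ${\rm St}(d,K)=\{\bm{Q}\in\mathbb{R}^{d\times K}:\bm{Q}^T\bm{Q}=\bm{I}_K\}$; $\mathcal{B}(n,K)$ is the set of $n\times K$ matrices with entries in $\{\pm1\}$; $\langle\bm{A},\bm{B}\rangle=\operatorname{tr}(\bm{A}^T\bm{B})$; $\delta_{\mathcal{S}}$ is the indicator function. A limiting critical point of a proper lower semicontinuous function $f$ is a point $\bm{x}$ with $\bm{0}\in\partial f(\bm{x})$, where $\partial$ is the limiting subdifferential. *)

(* Defs.v *)
From HB Require Import structures.
From mathcomp Require Import all_boot all_order all_algebra.
From mathcomp Require Import all_classical all_reals ereal.
Set Implicit Arguments. Unset Strict Implicit. Unset Printing Implicit Defensive.
Import Order.TTheory GRing.Theory Num.Theory.
Local Open Scope ring_scope.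

Section VarAnal.
Variables (R : realType) (V : zmodType) (ip : V -> V -> R).

Definition ipnorm (x : V) : R := Num.sqrt (ip x x).

(* Frechet (regular) subgradient v of f at x:
   liminf_{y -> x, y <> x} (f y - f x - <v, y - x>) / ||y - x|| >= 0,
   with f x finite. *)
Definition frechet_subgrad (f : V -> \bar R) (x v : V) : Prop :=
  f x \is a fin_num /\
  forall e : R, 0 < e -> exists2 delta : R, 0 < delta &
    forall y : V, ipnorm (y - x) < delta ->
      (f x + (ip v (y - x) - e * ipnorm (y - x))%:E <= f y)%E.

Definition limiting_subgrad (f : V -> \bar R) (x v : V) : Prop :=
  f x \is a fin_num /\
  exists (xs vs : nat -> V),
    (forall k, frechet_subgrad f (xs k) (vs k)) /\
    (forall e : R, 0 < e -> exists N : nat, forall k, (N <= k)%N ->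
        ipnorm (xs k - x) < e /\ ipnorm (vs k - v) < e /\
        `|fine (f (xs k)) - fine (f x)| < e).

Definition limiting_critical (f : V -> \bar R) (x : V) : Prop :=
  limiting_subgrad f x 0.
End VarAnal.

Definition frob (R : realType) (m k : nat) (A B : 'M[R]_(m, k)) : R :=
  \tr (A^T *m B).

Definition frob_norm (R : realType) (m k : nat) (A : 'M[R]_(m, k)) : R :=
  Num.sqrt (frob A A).

Definition ip2 (R : realType) (n d K : nat)
    (x y : 'M[R]_(n, K) * 'M[R]_(d, K)) : R :=
  frob x.1 y.1 + frob x.2 y.2.

Definition ip3 (R : realType) (n d K : nat)
    (x y : 'M[R]_(n, K) * 'M[R]_(d, K) * 'M[R]_(d, K)) : R :=
  frob x.1.1 y.1.1 + frob x.1.2 y.1.2 + frob x.2 y.2.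

Definition pm1_mx (R : realType) (n K : nat) (P : 'M[R]_(n, K)) : Prop :=
  forall i j, P i j = 1 \/ P i j = -1.

Definition stiefel (R : realType) (d K : nat) (Q : 'M[R]_(d, K)) : Prop :=
  Q^T *m Q = 1%:M.

Definition indic (R : realType) (T : Type) (S : T -> Prop) (x : T) : \bar R :=
  if `[< S x >] then 0%E else +oo%E.

Definition h_obj (R : realType) (d n K : nat) (X : 'M[R]_(d, n))
    (z : 'M[R]_(n, K) * 'M[R]_(d, K)) : \bar R :=
  ((- frob z.1 (X^T *m z.2))%:E + @indic R _ (@pm1_mx R n K) z.1
     + @indic R _ (@stiefel R d K) z.2)%E.

Definition Psi_obj (R : realType) (d n K : nat) (X : 'M[R]_(d, n)) (beta : R)
    (z : 'M[R]_(n, K) * 'M[R]_(d, K) * 'M[R]_(d, K)) : \bar R :=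
  (h_obj X z.1 + (beta / 2 * frob_norm (z.1.2 - z.2) ^+ 2)%:E)%E.

(* Main.v *)
Require Import Defs.
From HB Require Import structures.
From mathcomp Require Import all_boot all_order all_algebra.
From mathcomp Require Import all_classical all_reals ereal.
From mathcomp Require Import ring lra.
Import Order.TTheory GRing.Theory Num.Theory.
Set Implicit Arguments. Unset Strict Implicit. Unset Printing Implicit Defensive.
Local Open Scope ring_scope.

Section Frob.
Variables (R : realType) (m k : nat).
Implicit Types A B C : 'M[R]_(m,k).

Lemma frobE A B : frob A B = \sum_(j < k) \sum_(i < m) A i j * B i j.
Proof.
rewrite /frob /mxtrace; apply: eq_bigr => j _; rewrite !mxE.
by apply: eq_bigr => i _; rewrite !mxE.
Qed.

Lemma frobC A B : frob A B = frob B A.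
Proof. by rewrite !frobE; apply: eq_bigr => j _; apply: eq_bigr => i _; rewrite mulrC. Qed.

Lemma frobDr A B C : frob A (B + C) = frob A B + frob A C.
Proof.
rewrite !frobE -big_split; apply: eq_bigr => j _.
by rewrite -big_split; apply: eq_bigr => i _; rewrite mxE mulrDr.
Qed.

Lemma frobDl A B C : frob (B + C) A = frob B A + frob C A.
Proof. by rewrite frobC frobDr !(frobC A). Qed.

Lemma frobZr a A B : frob A (a *: B) = a * frob A B.
Proof.
rewrite !frobE mulr_sumr; apply: eq_bigr => j _.
by rewrite mulr_sumr; apply: eq_bigr => i _; rewrite mxE mulrCA.
Qed.

Lemma frobZl a A B : frob (a *: A) B = a * frob A B.
Proof. by rewrite frobC frobZr frobC. Qed.

Lemma frobNr A B : frob A (- B) = - frob A B.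
Proof. by rewrite -scaleN1r frobZr mulN1r. Qed.

Lemma frobNl A B : frob (- A) B = - frob A B.
Proof. by rewrite frobC frobNr frobC. Qed.

Lemma frob0r A : frob A 0 = 0.
Proof. by rewrite -(scale0r 0) frobZr mul0r. Qed.

Lemma frob0l A : frob 0 A = 0.
Proof. by rewrite frobC frob0r. Qed.

Lemma frob_ge0 A : 0 <= frob A A.
Proof.
rewrite frobE; apply: sumr_ge0 => j _; apply: sumr_ge0 => i _.
by rewrite -expr2 sqr_ge0.
Qed.

Lemma frob_entry A i j : A i j ^+ 2 <= frob A A.
Proof.
rewrite frobE (bigD1 j) //= (bigD1 i) //= -expr2 -addrA lerDl.
by rewrite addr_ge0 // sumr_ge0 // => *; rewrite ?sumr_ge0 // => *; rewrite -expr2 sqr_ge0.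
Qed.

Lemma frob_eq0 A : frob A A = 0 -> A = 0.
Proof.
move=> H; apply/matrixP => i j; rewrite mxE.
have := frob_entry A i j; rewrite H => h.
have h2 : A i j ^+ 2 = 0 by apply/eqP; rewrite eq_le h sqr_ge0.
by apply/eqP; rewrite -sqrf_eq0 h2.
Qed.

Lemma abs_entry A i j : `|A i j| <= Num.sqrt (frob A A).
Proof. by rewrite -sqrtr_sqr ler_wsqrtr // frob_entry. Qed.

Lemma frob_normE A : frob_norm A ^+ 2 = frob A A.
Proof. by rewrite /frob_norm sqr_sqrtr // frob_ge0. Qed.

End Frob.

Lemma frechet_realP (R : realType) (V : zmodType) (ip : V -> V -> R)
  (f : V -> \bar R) (S : V -> Prop) (g : V -> R) x v :
  (forall y, S y -> f y = (g y)%:E) -> (forall y, ~ S y -> f y = +oo%E) -> S x ->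
  (frechet_subgrad ip f x v <->
   forall e : R, 0 < e -> exists2 delta : R, 0 < delta &
     forall y, S y -> ipnorm ip (y - x) < delta ->
       g x + (ip v (y - x) - e * ipnorm ip (y - x)) <= g y).
Proof.
move=> Hf Hi Sx; split.
- case=> _ H e /H [delta dp Hd]; exists delta => // y Sy /Hd.
  by rewrite !Hf // -EFinD lee_fin.
- move=> H; split; first by rewrite Hf.
  move=> e /H [delta dp Hd]; exists delta => // y Hy.
  have [Sy|nSy] := pselect (S y); last by rewrite (Hi y) // leey.
  by rewrite !Hf // -EFinD lee_fin Hd.
Qed.
Arguments frechet_realP {R V ip f S g x v}.

Section Obj.
Variables (R : realType) (d n K : nat) (X : 'M[R]_(d, n)) (beta : R).
Local Notation Mn := 'M[R]_(n, K).
Local Notation Md := 'M[R]_(d, K).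

Definition hval (z : Mn * Md) : R := - frob z.1 (X^T *m z.2).
Definition Sh (z : Mn * Md) : Prop := pm1_mx z.1 /\ stiefel z.2.
Definition cval (z : Mn * Md * Md) : R := beta / 2 * frob (z.1.2 - z.2) (z.1.2 - z.2).
Definition pval (z : Mn * Md * Md) : R := hval z.1 + cval z.

Lemma h_feas z : Sh z -> h_obj X z = (hval z)%:E.
Proof.
case=> h1 h2; rewrite /h_obj /indic.
case: asboolP => // _; case: asboolP => // _.
by rewrite !adde0.
Qed.

Lemma h_infeas z : ~ Sh z -> h_obj X z = +oo%E.
Proof.
move=> nS; rewrite /h_obj /indic.
case: asboolP => h1; case: asboolP => h2 //; first (by exfalso; apply: nS);
  by rewrite ?adde0 ?addey ?addye.
Qed.

Lemma h_fin z : h_obj X z \is a fin_num -> Sh z.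
Proof.
move=> H; have [//|nS] := pselect (Sh z).
by move: H; rewrite h_infeas.
Qed.

Lemma Psi_feas z : Sh z.1 -> Psi_obj X beta z = (pval z)%:E.
Proof. by move=> S; rewrite /Psi_obj h_feas // frob_normE -EFinD. Qed.

Lemma Psi_infeas z : ~ Sh z.1 -> Psi_obj X beta z = +oo%E.
Proof. by move=> S; rewrite /Psi_obj h_infeas // addye. Qed.

Lemma Psi_fin z : Psi_obj X beta z \is a fin_num -> Sh z.1.
Proof.
move=> H; have [//|nS] := pselect (Sh z.1).
by move: H; rewrite Psi_infeas.
Qed.

End Obj.

Section Key.
Variables (R : realType) (d n K : nat) (X : 'M[R]_(d, n)) (beta : R).
Hypothesis bp : 0 < beta.

Lemma key x v : frechet_subgrad (@ip3 R n d K) (Psi_obj X beta) x v ->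
  v.2 = beta *: (x.2 - x.1.2).
Proof.
move=> Hf; have Sx := Psi_fin Hf.1.
move/(frechet_realP (Psi_feas X beta) (Psi_infeas X beta) Sx): Hf => H.
set w := v.2 - beta *: (x.2 - x.1.2).
suff: w = 0 by move/eqP; rewrite subr_eq0 => /eqP.
set F := frob w w.
have F0 : 0 <= F by apply: frob_ge0.
set N := Num.sqrt F.
have NF : N ^+ 2 = F by rewrite sqr_sqrtr.
have [Np|Nle] := ltP 0 N; last first.
  apply: frob_eq0; rewrite -/F -NF.
  have -> : N = 0 by apply/eqP; rewrite eq_le Nle sqrtr_ge0.
  by rewrite expr0n.
exfalso.
have [delta dp Hd] := H (N / 4) (divr_gt0 Np (ltr0Sn _ 3)).
set t := Num.min (delta / (2 * N)) (1 / (2 * beta)).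
have tp : 0 < t.
  by rewrite lt_min; apply/andP; split; apply: divr_gt0 => //; rewrite ?mulr_gt0.
have t1 : t <= delta / (2 * N) by rewrite ge_min lexx.
have t2 : t <= 1 / (2 * beta) by rewrite ge_min lexx orbT.
set y := (x.1, x.2 + t *: w).
have Sy : Sh y.1 := Sx.
have ny : ipnorm (@ip3 R n d K) (y - x) = t * N.
  rewrite /ipnorm /ip3 /= !subrr !frob0r !add0r.
  have -> : x.2 + t *: w - x.2 = t *: w by rewrite addrAC subrr add0r.
  rewrite frobZl frobZr mulrA -expr2 sqrtrM ?sqr_ge0 // sqrtr_sqr ger0_norm //.
  exact: ltW.
have tN : t * N < delta.
  have : t * N <= delta / 2.
    have := ler_wpM2r (ltW Np) t1.
    have -> : delta / (2 * N) * N = delta / 2 by field; rewrite gt_eqF.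
    by [].
  by lra.
have := Hd y Sy; rewrite ny => /(_ tN).
rewrite /pval /cval /= /ip3 /= !subrr !frob0r !add0r.
have -> : x.2 + t *: w - x.2 = t *: w by rewrite addrAC subrr add0r.
set D := x.1.2 - x.2.
have -> : x.1.2 - (x.2 + t *: w) = D - t *: w by rewrite opprD addrA.
have ev2 : v.2 = w - beta *: D.
  by rewrite /w /D -addrA -opprD -scalerDr addrA subrK subrr scaler0 oppr0 addr0.
have FE : frob w w = N ^+ 2 by rewrite NF.
clearbody y t N F D w.
rewrite ev2 !(frobDl, frobDr, frobNl, frobNr, frobZl, frobZr) (frobC w D) FE.
move=> ineq.
have bt : beta * t <= 1 / 2.
  have := ler_wpM2l (ltW bp) t2.
  have -> : beta * (1 / (2 * beta)) = 1 / 2 by field; rewrite gt_eqF.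
  by [].
have h1 : 0 <= (1 / 2 - beta * t) * (t * N ^+ 2).
  apply: mulr_ge0; first by rewrite subr_ge0.
  by apply: mulr_ge0; [exact: ltW | exact: sqr_ge0].
have h2 : 0 < t * N ^+ 2 by rewrite mulr_gt0 // exprn_gt0.
rewrite -subr_ge0 in ineq.
have hI : 0 <= beta * t * (t * N ^+ 2) / 2 - 3 / 4 * (t * N ^+ 2).
  have <- : hval X x.1 + beta / 2 * (frob D D - t * frob D w + (- (t * frob D w) - - (t * (t * N ^+ 2))))
     - (hval X x.1 + beta / 2 * frob D D + (t * N ^+ 2 - beta * (t * frob D w) - N / 4 * (t * N)))
     = beta * t * (t * N ^+ 2) / 2 - 3 / 4 * (t * N ^+ 2) by field.
  exact: ineq.
have hC : 0 <= (t * N ^+ 2) / 2 - beta * t * (t * N ^+ 2).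
  have -> : (t * N ^+ 2) / 2 - beta * t * (t * N ^+ 2) = (1 / 2 - beta * t) * (t * N ^+ 2) by field.
  exact: h1.
move: hI hC h2; set A := t * N ^+ 2; set C := beta * t * A.
lra.
Qed.
End Key.

Lemma sqrt_2 (R : realType) (a : R) : 0 <= a -> Num.sqrt (4 * a) = 2 * Num.sqrt a.
Proof.
move=> a0; rewrite sqrtrM // (_ : 4 = 2 ^+ 2); last by rewrite expr2; ring.
by rewrite sqrtr_sqr ger0_norm.
Qed.

Section Norms.
Variables (R : realType) (d n K : nat).
Local Notation Mn := 'M[R]_(n, K).
Local Notation Md := 'M[R]_(d, K).

Lemma n2_le_n3 (z : Mn * Md * Md) : ipnorm (@ip2 R n d K) z.1 <= ipnorm (@ip3 R n d K) z.
Proof.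
rewrite /ipnorm /ip2 /ip3 ler_wsqrtr // lerDl; exact: frob_ge0.
Qed.

Lemma nA (z : Mn * Md) : ipnorm (@ip3 R n d K) (z, z.2) <= 2 * ipnorm (@ip2 R n d K) z.
Proof.
rewrite /ipnorm /ip2 /ip3 /= -sqrt_2; last by rewrite addr_ge0 // frob_ge0.
apply: ler_wsqrtr; have := frob_ge0 z.1; have := frob_ge0 z.2; lra.
Qed.

Lemma nB (z : Mn * Md) : ipnorm (@ip3 R n d K) (z, 0) = ipnorm (@ip2 R n d K) z.
Proof. by rewrite /ipnorm /ip2 /ip3 /= frob0r addr0. Qed.

Lemma nC (z : Mn * Md * Md) :
  ipnorm (@ip2 R n d K) (z.1.1, z.1.2 + z.2) <= 2 * ipnorm (@ip3 R n d K) z.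
Proof.
rewrite /ipnorm /ip2 /ip3 /= -sqrt_2; last by rewrite !addr_ge0 // frob_ge0.
apply: ler_wsqrtr; rewrite !(frobDl, frobDr) (frobC z.2 z.1.2).
have := frob_ge0 (z.1.2 - z.2); rewrite !(frobDl, frobDr, frobNl, frobNr) opprK (frobC z.2 z.1.2).
have := frob_ge0 z.1.1; have := frob_ge0 z.1.2; have := frob_ge0 z.2; lra.
Qed.

Lemma ent12 (z : Mn * Md * Md) i j : `|z.1.2 i j| <= ipnorm (@ip3 R n d K) z.
Proof.
apply: le_trans (abs_entry _ i j) _; rewrite /ipnorm /ip3 ler_wsqrtr //.
have := frob_ge0 z.1.1; have := frob_ge0 z.2; lra.
Qed.

Lemma ent2 (z : Mn * Md * Md) i j : `|z.2 i j| <= ipnorm (@ip3 R n d K) z.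
Proof.
apply: le_trans (abs_entry _ i j) _; rewrite /ipnorm /ip3 ler_wsqrtr //.
have := frob_ge0 z.1.1; have := frob_ge0 z.1.2; lra.
Qed.

Lemma frob2_le (z : Mn * Md * Md) : frob z.2 z.2 <= ipnorm (@ip3 R n d K) z ^+ 2.
Proof.
rewrite /ipnorm sqr_sqrtr /ip3; last by rewrite !addr_ge0 // frob_ge0.
have := frob_ge0 z.1.1; have := frob_ge0 z.1.2; lra.
Qed.

End Norms.

Section Frech.
Variables (R : realType) (d n K : nat) (X : 'M[R]_(d, n)) (beta : R).
Hypothesis bp : 0 < beta.
Local Notation Mn := 'M[R]_(n, K).
Local Notation Md := 'M[R]_(d, K).

Lemma cval_ge0 (z : Mn * Md * Md) : 0 <= cval beta z.
Proof. rewrite /cval; apply: mulr_ge0; last exact: frob_ge0. by rewrite divr_ge0 // ltW. Qed.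

Lemma frechA (x v : Mn * Md) :
  frechet_subgrad (@ip2 R n d K) (h_obj X) x v ->
  frechet_subgrad (@ip3 R n d K) (Psi_obj X beta) (x, x.2) (v, 0).
Proof.
move=> Hf; have Sx := h_fin Hf.1.
move/(frechet_realP (h_feas X) (h_infeas X) Sx): Hf => H.
apply/(@frechet_realP _ _ _ _ _ _ (x, x.2) (v, 0) (Psi_feas X beta) (Psi_infeas X beta) Sx) => e ep.
have [delta dp Hd] := H e ep; exists delta => // y Sy ny.
have n23 := n2_le_n3 (y - (x, x.2)).
have := Hd y.1 Sy (le_lt_trans n23 ny).
rewrite /pval /cval /= subrr frob0r mulr0 addr0 /ip3 /ip2 /= frob0l addr0.
have := cval_ge0 y; rewrite /cval.
have := ler_wpM2l (ltW ep) n23.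
lra.
Qed.

Lemma frechB (x v : Mn * Md * Md) :
  frechet_subgrad (@ip3 R n d K) (Psi_obj X beta) x v ->
  frechet_subgrad (@ip2 R n d K) (h_obj X) x.1 (v.1.1, v.1.2 + v.2).
Proof.
move=> Hf; have Sx := Psi_fin Hf.1.
move/(frechet_realP (Psi_feas X beta) (Psi_infeas X beta) Sx): Hf => H.
apply/(@frechet_realP _ _ _ _ _ _ x.1 (v.1.1, v.1.2 + v.2) (h_feas X) (h_infeas X) Sx) => e ep.
have [delta dp Hd] := H (e / 2) (divr_gt0 ep (ltr0Sn _ 1)).
exists (delta / 2); first exact: divr_gt0.
move=> y Sy ny.
set y' : Mn * Md * Md := (y, x.2 + (y.2 - x.1.2)).
have e1 : y'.2 - x.2 = y.2 - x.1.2.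
  by apply/matrixP => i j; rewrite !mxE /=; ring.
have e2 : y'.1.2 - y'.2 = x.1.2 - x.2.
  by apply/matrixP => i j; rewrite !mxE /=; ring.
have n32 : ipnorm (@ip3 R n d K) (y' - x) <= 2 * ipnorm (@ip2 R n d K) (y - x.1).
  rewrite /ipnorm /ip2 /ip3 /= e1 -sqrt_2; last by rewrite addr_ge0 // frob_ge0.
  apply: ler_wsqrtr.
  have := frob_ge0 (y.1 - x.1.1); have := frob_ge0 (y.2 - x.1.2); lra.
have ny' : ipnorm (@ip3 R n d K) (y' - x) < delta by lra.
have ipE : ip3 v (y' - x) = ip2 (v.1.1, v.1.2 + v.2) (y - x.1).
  by rewrite /ip3 /ip2 /= e1 frobDl addrA.
have := Hd y' Sy ny'.
rewrite ipE /pval /cval e2 /=.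
have := ler_wpM2l (ltW ep) n32.
lra.
Qed.

End Frech.

Unset Implicit Arguments.

Lemma small0 (R : realType) (a c : R) : 0 < c ->
  (forall e, 0 < e -> `|a| <= e * c) -> a = 0.
Proof.
move=> cp H; have [//|an] := eqVneq a 0.
have ap : 0 < `|a| by rewrite normr_gt0.
have := H (`|a| / (2 * c)) (divr_gt0 ap (mulr_gt0 (ltr0Sn _ 1) cp)).
have -> : `|a| / (2 * c) * c = `|a| / 2 by field; rewrite gt_eqF.
lra.
Qed.

Theorem lemma2 (R : realType) (d n K : nat) (X : 'M[R]_(d, n)) (beta : R)
    (P : 'M[R]_(n, K)) (Q Q' : 'M[R]_(d, K)) :
  (1 <= K)%N -> (K <= minn n d)%N -> 0 < beta ->
  pm1_mx P -> stiefel Q ->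
  (limiting_critical (@ip3 R n d K) (Psi_obj X beta) (P, Q, Q') -> Q = Q') /\
  (limiting_critical (@ip3 R n d K) (Psi_obj X beta) (P, Q, Q) <->
   limiting_critical (@ip2 R n d K) (h_obj X) (P, Q)).
Proof.
move=> _ _ bp hP hQ.
have SPQ : Sh (P, Q) by split.
have PsiD : forall z : 'M[R]_(n,K) * 'M[R]_(d,K), Psi_obj X beta (z, z.2) = h_obj X z.
  by move=> z; rewrite /Psi_obj /= subrr /frob_norm frob0r sqrtr0 expr0n /= mulr0 adde0.
split.
- case=> _ [xs [vs [Hf Hc]]].
  apply/matrixP => i j.
  apply/eqP; rewrite -subr_eq0; apply/eqP.
  apply: (@small0 _ _ (2 + beta^-1)); first by rewrite addr_gt0 ?invr_gt0.
  move=> e ep.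
  have [N HN] := Hc e ep.
  have [hx [hv _]] := HN N (leqnn N).
  have kN := key bp (Hf N).
  have a1 := le_lt_trans (ent12 (xs N - (P, Q, Q')) i j) hx.
  have a2 := le_lt_trans (ent2 (xs N - (P, Q, Q')) i j) hx.
  rewrite subr0 in hv.
  have a3 := le_lt_trans (ent2 (vs N) i j) hv.
  rewrite kN !mxE normrM gtr0_norm // -ltr_pdivlMl // in a3.
  rewrite /= !mxE in a1 a2.
  move: a1 a2 a3; rewrite !ltr_norml ler_norml.
  have -> : e * (2 + beta^-1) = 2 * e + beta^-1 * e by ring.
  set f := beta^-1 * e.
  lra.
split.
- case=> _ [xs [vs [Hf Hc]]].
  split; first by rewrite h_feas.
  exists (fun k => (xs k).1), (fun k => ((vs k).1.1, (vs k).1.2 + (vs k).2)); split.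
    by move=> k; exact: frechB (Hf k).
  move=> e ep.
  set e1 := Num.min (e / 2) beta.
  have e1p : 0 < e1 by rewrite lt_min; apply/andP; split => //; apply: divr_gt0.
  have e1a : e1 <= e / 2 by rewrite ge_min lexx.
  have e1b : e1 <= beta by rewrite ge_min lexx orbT.
  have [N HN] := Hc e1 e1p; exists N => k kN; have [hx [hv hf]] := HN k kN.
  split; [|split].
  + apply: le_lt_trans (n2_le_n3 _) (lt_le_trans hx _); lra.
  + rewrite subr0; rewrite subr0 in hv; apply: le_lt_trans (nC _) _; lra.
  + have Sk := Psi_fin (Hf k).1.
    rewrite (Psi_feas X beta Sk) (@Psi_feas _ _ _ _ X beta (P, Q, Q) SPQ) /= in hf.
    rewrite (h_feas X Sk) (h_feas X SPQ) /=.
    move: hf; rewrite /pval /cval /= subrr frob0r mulr0 addr0.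
    have kk := key bp (Hf k).
    set D := (xs k).1.2 - (xs k).2.
    have FD : beta ^+ 2 * frob D D = frob (vs k).2 (vs k).2.
      rewrite kk frobZl frobZr (_ : (xs k).2 - (xs k).1.2 = - D); last by rewrite /D opprB.
      by rewrite frobNl frobNr opprK mulrA expr2.
    rewrite subr0 in hv.
    have n0 : 0 <= ipnorm (@ip3 R n d K) (vs k) by apply: sqrtr_ge0.
    have h1 : ipnorm (@ip3 R n d K) (vs k) ^+ 2 <= e1 * e1.
      by rewrite expr2; apply: ler_pM => //; apply: ltW.
    have h2 := frob2_le (vs k).
    have h3 : e1 * e1 <= beta * e1 by rewrite ler_pM2r.
    have h4 : beta * (beta * frob D D) <= beta * e1.
      rewrite mulrA -expr2 FD; lra.
    rewrite ler_pM2l // in h4.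
    have h5 : 0 <= frob D D by apply: frob_ge0.
    have h6 : 0 <= beta * frob D D by rewrite mulr_ge0 // ltW.
    have -> : beta / 2 * frob D D = (beta * frob D D) / 2 by ring.
    rewrite !ltr_norml; lra.
- case=> _ [xs [vs [Hf Hc]]].
  split; first by rewrite (PsiD (P, Q)) h_feas.
  exists (fun k => (xs k, (xs k).2)), (fun k => (vs k, 0)); split.
    by move=> k; exact: frechA.
  move=> e ep.
  have [N HN] := Hc (e / 2) (divr_gt0 ep (ltr0Sn _ 1)).
  exists N => k kN; have [hx [hv hf]] := HN k kN.
  split; [|split].
  + apply: le_lt_trans (nA (xs k - (P, Q))) _; lra.
  + rewrite subr0 nB; rewrite subr0 in hv; lra.
  + rewrite PsiD (PsiD (P, Q)); lra.
Qed.
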